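(* Let $P$ be a finite nonempty set of points lying in a single quadrant $Q$ with respect to the origin $s$, and let $e\ne s$ be such that the line $\overline{se}$ is not in the quadrant $Q$. Then, with $d^{\max}=\max_{p\in P} d(p,\overline{se})$, $$d^{\max} \ge \max\Big\{ \min\{d(l_1,\overline{se}),d(l_2,\overline{se})\},\ \min\{d(u_1,\overline{se}),d(l_2,\overline{se})\},\ \text{the third largest of } d(c_1,\overline{se}),\dots,d(c_4,\overline{se})\Big\},$$ and for every $p\in P$, $$d(p,\overline{se}) \le \max_{i\in\{1,2,3,4\}} d(c_i,\overline{se}).$$
   Context: Bounded Quadrant System (BQS) setup. Points are in the plane with UTM-projected $x$ and $y$ axes, and the start point $s$ is taken as the origin. For a point $p\ne s$, $\theta(p)\in[0,2\pi)$ is the angle between the positive $x$ axis and the vector from $s$ to $p$; $\theta_{s,e}=\theta(e)$. The four quadrants are $Q_k=\{p\neq s: (k-1)\pi/2 \le \theta(p) < k\pi/2\}$, $k=1,\dots,4$; quadrant $Q_k$ has angle range $[\theta^Q_{start},\theta^Q_{end}) = [(k-1)\pi/2,k\pi/2)$. A line $\overline{se}$ is ''in'' quadrant $Q$ if $\theta^Q_{start}\le \theta_{s,e}<\theta^Q_{end}$. For a finite nonempty $P\subset Q$: the bounding box is the smallest closed axis-parallel rectangle containing $P$, with corners $c_1,\dots,c_4$. $\theta_{lb}=\min_{p\in P}\theta(p)$ and $\theta_{ub}=\max_{p\in P}\theta(p)$; the lower (resp. upper) bounding line is the ray from $s$ at angle $\theta_{lb}$ (resp. $\theta_{ub}$).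 $l_1,l_2$ are the intersection points of the lower bounding line with the boundary of the bounding box and $u_1,u_2$ those of the upper bounding line, with index 1 the intersection nearer to $s$ (they may coincide). $d(p,\overline{se})$ is the Euclidean distance from the point $p$ to the line segment from $s$ to $e$. *)

(* Defs.v *)
From Stdlib Require Import Reals Lra List.
Import ListNotations.
Open Scope R_scope.

Definition pt := (R * R)%type.
Definition s0 : pt := (0, 0).

(* polar angle theta(p) in [0, 2*PI) of the vector from s = origin to p
   (value at p = origin irrelevant; set to 0). *)
Definition theta (p : pt) : R :=
  let (x, y) := p in
  if Rlt_dec 0 x then
    (if Rle_dec 0 y then atan (y / x) else 2 * PI + atan (y / x))
  else if Rlt_dec x 0 then PI + atan (y / x)
  else (if Rlt_dec 0 y then PI / 2 else if Rlt_dec y 0 then 3 * PI / 2 else 0).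

Definition in_quadrant (k : nat) (p : pt) : Prop :=
  p <> s0 /\ (INR k - 1) * PI / 2 <= theta p < INR k * PI / 2.

Definition line_in_quadrant (k : nat) (e : pt) : Prop :=
  (INR k - 1) * PI / 2 <= theta e < INR k * PI / 2.

Definition clamp01 (t : R) : R := Rmax 0 (Rmin 1 t).
Definition dseg (p e : pt) : R :=
  let (px, py) := p in let (ex, ey) := e in
  let t := clamp01 ((px * ex + py * ey) / (ex * ex + ey * ey)) in
  sqrt ((px - t * ex) ^ 2 + (py - t * ey) ^ 2).

Definition lmin (f : pt -> R) (P : list pt) : R :=
  fold_right Rmin (f (hd s0 P)) (map f P).
Definition lmax (f : pt -> R) (P : list pt) : R :=
  fold_right Rmax (f (hd s0 P)) (map f P).

Definition xmin P := lmin fst P.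
Definition xmax P := lmax fst P.
Definition ymin P := lmin snd P.
Definition ymax P := lmax snd P.
Definition corner1 P : pt := (xmin P, ymin P).
Definition corner2 P : pt := (xmax P, ymin P).
Definition corner3 P : pt := (xmax P, ymax P).
Definition corner4 P : pt := (xmin P, ymax P).
Definition in_box (P : list pt) (q : pt) : Prop :=
  xmin P <= fst q <= xmax P /\ ymin P <= snd q <= ymax P.

Definition theta_lb P := lmin theta P.
Definition theta_ub P := lmax theta P.

Definition ray_pt (th t : R) : pt := (t * cos th, t * sin th).

(* q1 (nearer to s) and q2 are the two intersection points of the ray from s at
   angle th with the boundary of the bounding box of P: the entry and exit points
   of the ray through the box. *)
Definition ray_box_points (P : list pt) (th : R) (q1 q2 : pt) : Prop :=
  exists t1 t2,
    0 <= t1 /\ 0 <= t2 /\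
    in_box P (ray_pt th t1) /\ in_box P (ray_pt th t2) /\
    (forall t, 0 <= t -> in_box P (ray_pt th t) -> t1 <= t <= t2) /\
    q1 = ray_pt th t1 /\ q2 = ray_pt th t2.

Fixpoint insert_desc (x : R) (l : list R) : list R :=
  match l with
  | [] => [x]
  | y :: l' => if Rle_dec y x then x :: l else y :: insert_desc x l'
  end.
Fixpoint sort_desc (l : list R) : list R :=
  match l with
  | [] => []
  | x :: l' => insert_desc x (sort_desc l')
  end.
Definition third_largest (a b c d : R) : R := nth 2 (sort_desc [a; b; c; d]) 0.

(* Main.v *)
Require Import Defs.
From Stdlib Require Import Reals Lra Lia Psatz List.
Import ListNotations.
Open Scope R_scope.



Definition NN (px py ex ey s : R) := (px - s*ex)^2 + (py - s*ey)^2.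

Lemma clamp_range t : 0 <= clamp01 t <= 1.
Proof. unfold clamp01, Rmax, Rmin; repeat destruct Rle_dec; lra. Qed.

Lemma NN_min px py ex ey s : (ex,ey) <> (0,0) -> 0 <= s <= 1 ->
  NN px py ex ey (clamp01 ((px*ex+py*ey)/(ex*ex+ey*ey))) <= NN px py ex ey s.
Proof.
  intros He Hs.
  assert (HE : 0 < ex*ex+ey*ey).
  { destruct (Req_dec ex 0); destruct (Req_dec ey 0); subst; try nra. congruence. }
  set (E := ex*ex+ey*ey) in *.
  set (s0 := (px*ex+py*ey)/E).
  assert (HD : px*ex+py*ey = s0 * E) by (unfold s0; field; lra).
  assert (Hdiff : forall t, NN px py ex ey s - NN px py ex ey t = E*(s-t)*(s+t-2*s0)).
  { intro t. transitivity ((s-t)*((s+t)*E - 2*(px*ex+py*ey))). unfold NN, E; ring. rewrite HD; ring. }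
  fold s0. specialize (Hdiff (clamp01 s0)).
  unfold clamp01, Rmax, Rmin in *; repeat destruct Rle_dec; try nra.
  - assert (0 <= E*((1-s)*(2*s0-s-1))) by (apply Rmult_le_pos; [lra| apply Rmult_le_pos; lra]).
    assert (E*(s-1)*(s+1-2*s0) = E*((1-s)*(2*s0-s-1))) by ring. lra.
  - assert (0 <= E*((s-s0)*(s-s0))) by (apply Rmult_le_pos; [lra| apply Rle_0_sqr]).
    assert (E*(s-s0)*(s+s0-2*s0) = E*((s-s0)*(s-s0))) by ring. lra.
  - assert (0 <= E*(s*(s-2*s0))) by (apply Rmult_le_pos; [lra| apply Rmult_le_pos; lra]).
    assert (E*(s-0)*(s+0-2*s0) = E*(s*(s-2*s0))) by ring. lra.
Qed.

Lemma dseg_le px py ex ey s : (ex,ey) <> (0,0) -> 0 <= s <= 1 ->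
  dseg (px,py) (ex,ey) <= sqrt (NN px py ex ey s).
Proof. intros; unfold dseg; apply sqrt_le_1_alt; apply NN_min; auto. Qed.

Lemma dseg_attain px py ex ey : exists t, 0 <= t <= 1 /\
  dseg (px,py) (ex,ey) = sqrt (NN px py ex ey t).
Proof. eexists; split; [apply clamp_range| reflexivity]. Qed.

Lemma tri a b c d : sqrt ((a+b)^2+(c+d)^2) <= sqrt (a^2+c^2) + sqrt (b^2+d^2).
Proof.
  assert (HA := sqrt_pos (a^2+c^2)). assert (HB := sqrt_pos (b^2+d^2)).
  assert (H1 : 0 <= a^2+c^2) by (pose proof (pow2_ge_0 a); pose proof (pow2_ge_0 c); lra).
  assert (H2 : 0 <= b^2+d^2) by (pose proof (pow2_ge_0 b); pose proof (pow2_ge_0 d); lra).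
  assert (H3 : 0 <= (a+b)^2+(c+d)^2) by (pose proof (pow2_ge_0 (a+b)); pose proof (pow2_ge_0 (c+d)); lra).
  apply Rsqr_incr_0_var; [|lra]. unfold Rsqr.
  rewrite sqrt_sqrt by exact H3.
  replace ((sqrt (a ^ 2 + c ^ 2) + sqrt (b ^ 2 + d ^ 2)) * (sqrt (a ^ 2 + c ^ 2) + sqrt (b ^ 2 + d ^ 2)))
   with (a^2+c^2 + (b^2+d^2) + 2 * (sqrt (a ^ 2 + c ^ 2) * sqrt (b ^ 2 + d ^ 2)))
   by (rewrite <- (sqrt_sqrt (a^2+c^2)) at 1 by exact H1; rewrite <- (sqrt_sqrt (b^2+d^2)) at 1 by exact H2; ring).
  rewrite <- sqrt_mult_alt by exact H1.
  assert (a*b+c*d <= sqrt ((a^2+c^2)*(b^2+d^2))).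
  { destruct (Rle_dec (a*b+c*d) 0). { assert (HH:=sqrt_pos ((a^2+c^2)*(b^2+d^2))). lra. }
    apply Rsqr_incr_0_var; [|apply sqrt_pos]. unfold Rsqr. rewrite sqrt_sqrt by (apply Rmult_le_pos; assumption).
    pose proof (pow2_ge_0 (a*d-b*c)).
    replace ((a ^ 2 + c ^ 2) * (b ^ 2 + d ^ 2)) with ((a*b+c*d)*(a*b+c*d) + (a*d-b*c)^2) by ring. lra. }
  replace ((a+b)^2+(c+d)^2) with (a^2+c^2+(b^2+d^2) + 2*(a*b+c*d)) by ring. lra.
Qed.

Lemma sqrt_scale l x y : 0 <= l -> sqrt ((l*x)^2+(l*y)^2) = l * sqrt (x^2+y^2).
Proof.
  intro Hl. replace ((l*x)^2+(l*y)^2) with (l^2 * (x^2+y^2)) by ring.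
  rewrite sqrt_mult_alt by apply pow2_ge_0. rewrite <- Rsqr_pow2, sqrt_Rsqr; auto.
Qed.



Lemma dseg_nonneg p e : 0 <= dseg p e.
Proof. destruct p, e. unfold dseg. apply sqrt_pos. Qed.

Lemma dseg_convex px py qx qy ex ey l : (ex,ey) <> (0,0) -> 0 <= l <= 1 ->
  dseg (l*px+(1-l)*qx, l*py+(1-l)*qy) (ex,ey) <= l*dseg (px,py) (ex,ey) + (1-l)*dseg (qx,qy) (ex,ey).
Proof.
  intros He Hl.
  destruct (dseg_attain px py ex ey) as [t [Ht Hp]].
  destruct (dseg_attain qx qy ex ey) as [t' [Ht' Hq]].
  rewrite Hp, Hq.
  eapply Rle_trans. apply (dseg_le _ _ _ _ (l*t+(1-l)*t')); auto; nra.
  unfold NN.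
  replace ((l * px + (1 - l) * qx - (l * t + (1 - l) * t') * ex) ^ 2 +
     (l * py + (1 - l) * qy - (l * t + (1 - l) * t') * ey) ^ 2) with
    ((l*(px - t*ex) + (1-l)*(qx-t'*ex))^2 + (l*(py - t*ey) + (1-l)*(qy-t'*ey))^2) by ring.
  eapply Rle_trans. apply tri.
  rewrite !sqrt_scale by lra. lra.
Qed.

Lemma dseg_convex_max px py qx qy ex ey l : (ex,ey) <> (0,0) -> 0 <= l <= 1 ->
  dseg (l*px+(1-l)*qx, l*py+(1-l)*qy) (ex,ey) <= Rmax (dseg (px,py) (ex,ey)) (dseg (qx,qy) (ex,ey)).
Proof.
  intros He Hl. eapply Rle_trans. apply dseg_convex; auto.
  pose proof (Rmax_l (dseg (px,py) (ex,ey)) (dseg (qx,qy) (ex,ey))).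
  pose proof (Rmax_r (dseg (px,py) (ex,ey)) (dseg (qx,qy) (ex,ey))). nra.
Qed.

Lemma dseg_origin ex ey : (ex,ey) <> (0,0) -> dseg (0,0) (ex,ey) = 0.
Proof.
  intro He. apply Rle_antisym; [|apply dseg_nonneg].
  eapply Rle_trans. apply (dseg_le _ _ _ _ 0); auto; lra.
  unfold NN. replace ((0 - 0 * ex) ^ 2 + (0 - 0 * ey) ^ 2) with 0 by ring. rewrite sqrt_0; lra.
Qed.

Lemma dseg_ray ux uy ex ey t1 t2 : (ex,ey) <> (0,0) -> 0 <= t1 <= t2 ->
  dseg (t1*ux, t1*uy) (ex,ey) <= dseg (t2*ux, t2*uy) (ex,ey).
Proof.
  intros He Ht. destruct (Req_dec t2 0).
  { assert (t1 = 0) by lra. subst. lra. }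
  pose proof (dseg_convex (t2*ux) (t2*uy) 0 0 ex ey (t1/t2) He) as H1.
  assert (0 <= t1/t2 <= 1).
  { split. unfold Rdiv; apply Rmult_le_pos; [lra|left; apply Rinv_0_lt_compat; lra]. apply (Rmult_le_reg_r t2); [lra|]. unfold Rdiv; rewrite Rmult_assoc, Rinv_l; lra. }
  specialize (H1 H0).
  replace (t1 / t2 * (t2 * ux) + (1 - t1 / t2) * 0) with (t1*ux) in H1 by (field; auto).
  replace (t1 / t2 * (t2 * uy) + (1 - t1 / t2) * 0) with (t1*uy) in H1 by (field; auto).
  rewrite dseg_origin in H1 by auto.
  pose proof (dseg_nonneg (t2*ux, t2*uy) (ex,ey)). nra.
Qed.

Lemma dseg_mono_x sx px py h ex ey : (ex,ey) <> (0,0) -> sx*sx = 1 -> 0 <= sx*px -> sx*ex <= 0 -> 0 <= h ->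
  dseg (px,py) (ex,ey) <= dseg (px+sx*h, py) (ex,ey).
Proof.
  intros He Hs Hp Hex Hh.
  destruct (dseg_attain (px+sx*h) py ex ey) as [t [Ht Hq]]. rewrite Hq.
  eapply Rle_trans. apply (dseg_le _ _ _ _ t); auto.
  apply sqrt_le_1_alt. unfold NN.
  assert (0 <= sx*(px - t*ex)) by nra.
  assert ((px + sx*h - t*ex)^2 = (px - t*ex)^2 + h*(2*(sx*(px-t*ex)) + h)).
  { replace (h * (2 * (sx * (px - t * ex)) + h)) with (2*h*sx*(px - t*ex) + h*h*1) by ring.
    rewrite <- Hs. ring. }
  assert (0 <= h*(2*(sx*(px-t*ex)) + h)) by (apply Rmult_le_pos; lra). lra.
Qed.

Lemma dseg_mono_y sy px py h ex ey : (ex,ey) <> (0,0) -> sy*sy = 1 -> 0 <= sy*py -> sy*ey <= 0 -> 0 <= h ->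
  dseg (px,py) (ex,ey) <= dseg (px, py+sy*h) (ex,ey).
Proof.
  intros He Hs Hp Hey Hh.
  destruct (dseg_attain px (py+sy*h) ex ey) as [t [Ht Hq]]. rewrite Hq.
  eapply Rle_trans. apply (dseg_le _ _ _ _ t); auto.
  apply sqrt_le_1_alt. unfold NN.
  assert (0 <= sy*(py - t*ey)) by nra.
  assert ((py + sy*h - t*ey)^2 = (py - t*ey)^2 + h*(2*(sy*(py-t*ey)) + h)).
  { replace (h * (2 * (sy * (py - t * ey)) + h)) with (2*h*sy*(py - t*ey) + h*h*1) by ring.
    rewrite <- Hs. ring. }
  assert (0 <= h*(2*(sy*(py-t*ey)) + h)) by (apply Rmult_le_pos; lra). lra.
Qed.



Lemma fold_max_ge (f : pt -> R) z l p : In p l -> f p <= fold_right Rmax z (map f l).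
Proof.
  induction l; simpl; [tauto|]. intros [<-|H].
  apply Rmax_l. eapply Rle_trans. apply IHl; auto. apply Rmax_r.
Qed.
Lemma fold_min_le (f : pt -> R) z l p : In p l -> fold_right Rmin z (map f l) <= f p.
Proof.
  induction l; simpl; [tauto|]. intros [<-|H].
  apply Rmin_l. eapply Rle_trans. apply Rmin_r. apply IHl; auto.
Qed.
Lemma fold_max_att (f : pt -> R) z l : fold_right Rmax z (map f l) = z \/ exists p, In p l /\ fold_right Rmax z (map f l) = f p.
Proof.
  induction l; simpl; auto. destruct (Rle_dec (f a) (fold_right Rmax z (map f l))) as [h|h].
  - rewrite Rmax_right by auto. destruct IHl as [H|[p [H1 H2]]]; [left; auto| right; exists p; auto].
  - rewrite Rmax_left by lra. right; exists a; auto.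
Qed.
Lemma fold_min_att (f : pt -> R) z l : fold_right Rmin z (map f l) = z \/ exists p, In p l /\ fold_right Rmin z (map f l) = f p.
Proof.
  induction l; simpl; auto. destruct (Rle_dec (f a) (fold_right Rmin z (map f l))) as [h|h].
  - rewrite Rmin_left by auto. right; exists a; auto.
  - rewrite Rmin_right by lra. destruct IHl as [H|[p [H1 H2]]]; [left; auto| right; exists p; auto].
Qed.

Lemma lmax_ge f P p : In p P -> f p <= lmax f P.
Proof. apply fold_max_ge. Qed.
Lemma lmin_le f P p : In p P -> lmin f P <= f p.
Proof. apply fold_min_le. Qed.
Lemma lmax_att f P : P <> [] -> exists p, In p P /\ lmax f P = f p.
Proof.
  intro HP. unfold lmax. destruct (fold_max_att f (f (hd s0 P)) P) as [H|H]; auto.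
  exists (hd s0 P). split; auto. destruct P; [congruence|simpl; auto].
Qed.
Lemma lmin_att f P : P <> [] -> exists p, In p P /\ lmin f P = f p.
Proof.
  intro HP. unfold lmin. destruct (fold_min_att f (f (hd s0 P)) P) as [H|H]; auto.
  exists (hd s0 P). split; auto. destruct P; [congruence|simpl; auto].
Qed.

Ltac tlbash := unfold third_largest; simpl; repeat (destruct Rle_dec; simpl); lra.
Lemma tl14 a b c d M : a <= M -> d <= M -> third_largest a b c d <= M.
Proof. intros; tlbash. Qed.
Lemma tl23 a b c d M : b <= M -> c <= M -> third_largest a b c d <= M.
Proof. intros; tlbash. Qed.
Lemma tl12 a b c d M : a <= M -> b <= M -> third_largest a b c d <= M.
Proof. intros; tlbash. Qed.
Lemma tl34 a b c d M : c <= M -> d <= M -> third_largest a b c d <= M.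
Proof. intros; tlbash. Qed.



Lemma atan_pos z : 0 < z -> 0 < atan z.
Proof. intro. rewrite <- atan_0. apply atan_increasing; auto. Qed.
Lemma atan_neg z : z < 0 -> atan z < 0.
Proof. intro. rewrite <- atan_0. apply atan_increasing; auto. Qed.
Lemma div_nn x y : x < 0 -> y < 0 -> 0 < y / x.
Proof. intros. replace (y/x) with ((-y) * / (-x)) by (field; lra).
  apply Rmult_lt_0_compat; [lra| apply Rinv_0_lt_compat; lra]. Qed.
Lemma div_np x y : x < 0 -> 0 < y -> y / x < 0.
Proof. intros. replace (y/x) with (- (y * / (-x))) by (field; lra).
  assert (0 < y * / (-x)) by (apply Rmult_lt_0_compat; [lra| apply Rinv_0_lt_compat; lra]). lra. Qed.
Lemma div_pp x y : 0 < x -> 0 < y -> 0 < y / x.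
Proof. intros. apply Rmult_lt_0_compat; [lra| apply Rinv_0_lt_compat; lra]. Qed.
Lemma div_pn x y : 0 < x -> y < 0 -> y / x < 0.
Proof. intros. replace (y/x) with (- ((-y) * / x)) by (field; lra).
  assert (0 < (-y) * / x) by (apply Rmult_lt_0_compat; [lra| apply Rinv_0_lt_compat; lra]). lra. Qed.

Ltac atan_facts x y :=
  pose proof PI_RGT_0; pose proof (atan_bound (y/x));
  try (assert (0 < atan (y/x)) by (apply atan_pos; apply div_nn; lra));
  try (assert (atan (y/x) < 0) by (apply atan_neg; apply div_np; lra));
  try (assert (0 < atan (y/x)) by (apply atan_pos; apply div_pp; lra));
  try (assert (atan (y/x) < 0) by (apply atan_neg; apply div_pn; lra));
  try (let Hq := fresh in assert (Hq : y/x = 0) by (assert (y = 0) by lra; subst; unfold Rdiv; ring);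
       assert (atan (y/x) = 0) by (rewrite Hq; apply atan_0)).

Definition sx (k : nat) : R := match k with 1%nat | 4%nat => 1 | _ => -1 end.
Definition sy (k : nat) : R := match k with 1%nat | 2%nat => 1 | _ => -1 end.

Lemma quad_sign k x y : (1 <= k <= 4)%nat -> in_quadrant k (x,y) ->
  0 <= sx k * x /\ 0 <= sy k * y.
Proof.
  intros Hk [Hne Hth]. unfold theta in Hth. destruct (Rtotal_order y 0) as [?|[?|?]];
  destruct k as [|[|[|[|[|k]]]]]; try lia; simpl INR in Hth; simpl sx; simpl sy;
  repeat (destruct Rlt_dec in Hth || destruct Rle_dec in Hth); atan_facts x y;
  try (split; lra); try lra;
  (assert (x = 0) by lra; assert (y = 0) by lra; subst; exfalso; apply Hne; reflexivity).
Qed.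

Lemma line_sign k ex ey : (1 <= k <= 4)%nat -> 0 < sx k * ex -> 0 < sy k * ey ->
  line_in_quadrant k (ex,ey).
Proof.
  intros Hk H1 H2. unfold line_in_quadrant, theta.
  destruct k as [|[|[|[|[|k]]]]]; try lia; simpl INR; simpl sx in H1; simpl sy in H2;
  repeat (destruct Rlt_dec || destruct Rle_dec); atan_facts ex ey; lra.
Qed.

Lemma sqrt_fact x y : x <> 0 -> sqrt (x^2+y^2) = Rabs x * sqrt (1 + (y/x)²).
Proof.
  intro Hx. rewrite <- sqrt_Rsqr_abs. rewrite <- sqrt_mult_alt by apply Rle_0_sqr.
  f_equal. unfold Rsqr. field. auto.
Qed.

Lemma polar x y : (x,y) <> s0 ->
  ray_pt (theta (x,y)) (sqrt (x^2+y^2)) = (x,y).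
Proof.
  intro Hne. unfold ray_pt, theta.
  assert (Hs : forall z, 0 < sqrt (1 + z²)).
  { intro z. apply sqrt_lt_R0. pose proof (Rle_0_sqr z). lra. }
  destruct (Rlt_dec 0 x).
  - rewrite sqrt_fact by lra. rewrite Rabs_pos_eq by lra.
    destruct Rle_dec.
    + rewrite cos_atan, sin_atan. f_equal; field; repeat split; first [apply Rgt_not_eq, Hs | lra].
    + rewrite cos_plus, sin_plus, cos_2PI, sin_2PI, cos_atan, sin_atan.
      f_equal; field; repeat split; first [apply Rgt_not_eq, Hs | lra].
  - destruct (Rlt_dec x 0).
    + rewrite sqrt_fact by lra. rewrite Rabs_left by lra.
      rewrite cos_plus, sin_plus, cos_PI, sin_PI, cos_atan, sin_atan.
      f_equal; field; repeat split; first [apply Rgt_not_eq, Hs | lra].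
    + assert (x = 0) by lra. subst.
      replace (0^2+y^2) with (y^2) by ring.
      destruct (Rlt_dec 0 y).
      * rewrite sqrt_pow2 by lra. rewrite cos_PI2, sin_PI2. f_equal; ring.
      * destruct (Rlt_dec y 0).
        -- replace (y^2) with ((-y)^2) by ring. rewrite sqrt_pow2 by lra.
           replace (3*PI/2) with (PI/2 + PI) by field.
           rewrite neg_cos, neg_sin, cos_PI2, sin_PI2. f_equal; ring.
        -- assert (y = 0) by lra. subst. exfalso; apply Hne; reflexivity.
Qed.



Lemma seg_x a b x y ex ey : (ex,ey) <> (0,0) -> a <= x <= b ->
  dseg (x,y) (ex,ey) <= Rmax (dseg (a,y) (ex,ey)) (dseg (b,y) (ex,ey)).
Proof.
  intros He Hx. destruct (Req_dec a b).
  { subst. assert (x = b) by lra. subst. rewrite Rmax_left; lra. }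
  pose proof (dseg_convex_max a y b y ex ey ((b-x)/(b-a)) He) as H1.
  replace ((b - x) / (b - a) * a + (1 - (b - x) / (b - a)) * b) with x in H1 by (field; lra).
  replace ((b - x) / (b - a) * y + (1 - (b - x) / (b - a)) * y) with y in H1 by (field; lra).
  apply H1. split.
  - unfold Rdiv; apply Rmult_le_pos; [lra|left; apply Rinv_0_lt_compat; lra].
  - apply (Rmult_le_reg_r (b-a)); [lra|]. unfold Rdiv; rewrite Rmult_assoc, Rinv_l; lra.
Qed.

Lemma seg_y c d x y ex ey : (ex,ey) <> (0,0) -> c <= y <= d ->
  dseg (x,y) (ex,ey) <= Rmax (dseg (x,c) (ex,ey)) (dseg (x,d) (ex,ey)).
Proof.
  intros He Hx. destruct (Req_dec c d).
  { subst. assert (y = d) by lra. subst. rewrite Rmax_left; lra. }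
  pose proof (dseg_convex_max x c x d ex ey ((d-y)/(d-c)) He) as H1.
  replace ((d - y) / (d - c) * c + (1 - (d - y) / (d - c)) * d) with y in H1 by (field; lra).
  replace ((d - y) / (d - c) * x + (1 - (d - y) / (d - c)) * x) with x in H1 by (field; lra).
  apply H1. split.
  - unfold Rdiv; apply Rmult_le_pos; [lra|left; apply Rinv_0_lt_compat; lra].
  - apply (Rmult_le_reg_r (d-c)); [lra|]. unfold Rdiv; rewrite Rmult_assoc, Rinv_l; lra.
Qed.

Lemma in_box_P P p : In p P -> in_box P p.
Proof.
  intro H. unfold in_box, xmin, xmax, ymin, ymax.
  repeat split; [apply (lmin_le fst)|apply (lmax_ge fst)|apply (lmin_le snd)|apply (lmax_ge snd)]; auto.
Qed.

Lemma mono_gen sx x0 x y ex ey : (ex,ey) <> (0,0) -> sx*sx = 1 -> sx*ex <= 0 -> 0 <= sx*x0 ->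
  0 <= sx*(x-x0) -> dseg (x0,y) (ex,ey) <= dseg (x,y) (ex,ey).
Proof.
  intros. pose proof (dseg_mono_x sx x0 y (sx*(x-x0)) ex ey H H0 H2 H1 H3).
  replace (x0 + sx * (sx * (x - x0))) with x in H4; auto.
  replace (x0 + sx * (sx * (x - x0))) with (x0 + (sx*sx)*(x-x0)) by ring. rewrite H0. ring.
Qed.

Lemma mono_gen_y sy y0 x y ex ey : (ex,ey) <> (0,0) -> sy*sy = 1 -> sy*ey <= 0 -> 0 <= sy*y0 ->
  0 <= sy*(y-y0) -> dseg (x,y0) (ex,ey) <= dseg (x,y) (ex,ey).
Proof.
  intros. pose proof (dseg_mono_y sy x y0 (sy*(y-y0)) ex ey H H0 H2 H1 H3).
  replace (y0 + sy * (sy * (y - y0))) with y in H4; auto.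
  replace (y0 + sy * (sy * (y - y0))) with (y0 + (sy*sy)*(y-y0)) by ring. rewrite H0. ring.
Qed.


Lemma third_x (P : list pt) (ex ey : R) (HP : P <> []) (He : (ex,ey) <> (0,0)) sx : sx*sx = 1 -> sx*ex <= 0 -> (forall p, In p P -> 0 <= sx * fst p) ->
  forall x0, (x0 = xmin P \/ x0 = xmax P) -> (forall p, In p P -> 0 <= sx * (fst p - x0)) ->
  (fun q => dseg q (ex,ey)) (x0, ymin P) <= lmax (fun q => dseg q (ex,ey)) P /\ (fun q => dseg q (ex,ey)) (x0, ymax P) <= lmax (fun q => dseg q (ex,ey)) P.
Proof.
  intros Hs Hex Hsg x0 Hx0 Hx.
  assert (0 <= sx * x0).
  { unfold xmin, xmax in Hx0; destruct Hx0 as [->| ->]; [destruct (lmin_att fst P HP) as [q [Hq ->]]|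
     destruct (lmax_att fst P HP) as [q [Hq ->]]]; auto. }
  destruct (lmin_att snd P HP) as [p3 [H3 E3]].
  destruct (lmax_att snd P HP) as [p4 [H4 E4]].
  unfold ymin, ymax. rewrite E3, E4. split.
  - eapply Rle_trans; [|apply (lmax_ge (fun q => dseg q (ex,ey)) _ p3 H3)]. destruct p3 as [x3 y3].
    apply (mono_gen sx); auto. apply (Hx _ H3).
  - eapply Rle_trans; [|apply (lmax_ge (fun q => dseg q (ex,ey)) _ p4 H4)]. destruct p4 as [x4 y4].
    apply (mono_gen sx); auto. apply (Hx _ H4).
Qed.

Lemma third_y (P : list pt) (ex ey : R) (HP : P <> []) (He : (ex,ey) <> (0,0)) sy : sy*sy = 1 -> sy*ey <= 0 -> (forall p, In p P -> 0 <= sy * snd p) ->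
  forall y0, (y0 = ymin P \/ y0 = ymax P) -> (forall p, In p P -> 0 <= sy * (snd p - y0)) ->
  (fun q => dseg q (ex,ey)) (xmin P, y0) <= lmax (fun q => dseg q (ex,ey)) P /\ (fun q => dseg q (ex,ey)) (xmax P, y0) <= lmax (fun q => dseg q (ex,ey)) P.
Proof.
  intros Hs Hey Hsg y0 Hy0 Hy.
  assert (0 <= sy * y0).
  { unfold ymin, ymax in Hy0; destruct Hy0 as [->| ->]; [destruct (lmin_att snd P HP) as [q [Hq ->]]|
     destruct (lmax_att snd P HP) as [q [Hq ->]]]; auto. }
  destruct (lmin_att fst P HP) as [p3 [H3 E3]].
  destruct (lmax_att fst P HP) as [p4 [H4 E4]].
  unfold xmin, xmax. rewrite E3, E4. split.
  - eapply Rle_trans; [|apply (lmax_ge (fun q => dseg q (ex,ey)) _ p3 H3)]. destruct p3 as [x3 y3].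
    apply (mono_gen_y sy); auto. apply (Hy _ H3).
  - eapply Rle_trans; [|apply (lmax_ge (fun q => dseg q (ex,ey)) _ p4 H4)]. destruct p4 as [x4 y4].
    apply (mono_gen_y sy); auto. apply (Hy _ H4).
Qed.


Lemma ray_part P th q1 q2 p ex ey : (ex,ey) <> (0,0) -> In p P -> p <> s0 -> th = theta p ->
  ray_box_points P th q1 q2 -> dseg q1 (ex,ey) <= dseg p (ex,ey).
Proof.
  intros He Hp Hne Hth [t1 [t2 [Ht1 [Ht2 [_ [_ [Hall [E1 _]]]]]]]].
  destruct p as [x y]. set (r := sqrt (x^2+y^2)).
  assert (Hpol := polar x y Hne). fold r in Hpol.
  assert (t1 <= r).
  { apply (Hall r). apply sqrt_pos. rewrite Hth, Hpol. apply in_box_P; auto. }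
  subst q1. rewrite <- Hth in Hpol. rewrite <- Hpol. unfold ray_pt. apply dseg_ray; auto.
Qed.



Theorem theorem5 (k : nat) (P : list pt) (e : pt) (l1 l2 u1 u2 : pt) :
  (1 <= k <= 4)%nat ->
  P <> [] ->
  (forall p, In p P -> in_quadrant k p) ->
  e <> s0 ->
  ~ line_in_quadrant k e ->
  ray_box_points P (theta_lb P) l1 l2 ->
  ray_box_points P (theta_ub P) u1 u2 ->
  let d := fun q => dseg q e in
  let dmax := lmax d P in
  Rmax (Rmax (Rmin (d l1) (d l2)) (Rmin (d u1) (d l2)))
       (third_largest (d (corner1 P)) (d (corner2 P)) (d (corner3 P)) (d (corner4 P))) <= dmax /\
  (forall p, In p P ->
     d p <= Rmax (Rmax (d (corner1 P)) (d (corner2 P))) (Rmax (d (corner3 P)) (d (corner4 P)))).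
Proof.
  intros Hk HP HQ Hne Hline Hl Hu d dmax.
  destruct e as [ex ey]. assert (He : (ex,ey) <> (0,0)) by exact Hne.
  split.
  - apply Rmax_lub; [apply Rmax_lub|].
    + destruct (lmin_att theta P HP) as [p [Hp Ep]].
      eapply Rle_trans; [apply Rmin_l|].
      eapply Rle_trans; [apply (ray_part P (theta_lb P) l1 l2 p ex ey); auto|].
      { apply HQ; auto. }
      apply (lmax_ge d); auto.
    + destruct (lmax_att theta P HP) as [p [Hp Ep]].
      eapply Rle_trans; [apply Rmin_l|].
      eapply Rle_trans; [apply (ray_part P (theta_ub P) u1 u2 p ex ey); auto|].
      { apply HQ; auto. }
      apply (lmax_ge d); auto.
    + assert (Hsg : forall p, In p P -> 0 <= sx k * fst p /\ 0 <= sy k * snd p).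
      { intros [x y] Hp. apply quad_sign; auto. }
      assert (Hcase : sx k * ex <= 0 \/ sy k * ey <= 0).
      { destruct (Rlt_le_dec 0 (sx k * ex)); destruct (Rlt_le_dec 0 (sy k * ey)); auto.
        exfalso; apply Hline; apply line_sign; auto. }
      assert (Hxm : forall p, In p P -> xmin P <= fst p <= xmax P)
        by (intros p Hp; destruct (in_box_P P p Hp); auto).
      assert (Hym : forall p, In p P -> ymin P <= snd p <= ymax P)
        by (intros p Hp; destruct (in_box_P P p Hp); auto).
      unfold corner1, corner2, corner3, corner4, dmax, d.
      destruct k as [|[|[|[|[|k]]]]]; try lia; simpl sx in *; simpl sy in *;
      (destruct Hcase as [Hc|Hc];
       [ first
         [ destruct (third_x P ex ey HP He 1 ltac:(ring) Hc ltac:(intros p Hp; apply (Hsg p Hp)) (xmin P) ltac:(auto)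
              ltac:(intros p Hp; specialize (Hxm p Hp); lra)); apply tl14; auto
         | destruct (third_x P ex ey HP He (-1) ltac:(ring) Hc ltac:(intros p Hp; apply (Hsg p Hp)) (xmax P) ltac:(auto)
              ltac:(intros p Hp; specialize (Hxm p Hp); lra)); apply tl23; auto ]
       | first
         [ destruct (third_y P ex ey HP He 1 ltac:(ring) Hc ltac:(intros p Hp; apply (Hsg p Hp)) (ymin P) ltac:(auto)
              ltac:(intros p Hp; specialize (Hym p Hp); lra)); apply tl12; auto
         | destruct (third_y P ex ey HP He (-1) ltac:(ring) Hc ltac:(intros p Hp; apply (Hsg p Hp)) (ymax P) ltac:(auto)
              ltac:(intros p Hp; specialize (Hym p Hp); lra)); apply tl34; auto ] ]).
  - intros [x y] Hp. destruct (in_box_P P (x,y) Hp) as [[Hx1 Hx2] [Hy1 Hy2]]. simpl in Hx1, Hx2, Hy1, Hy2.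
    unfold d, corner1, corner2, corner3, corner4; cbv beta.
    pose proof (seg_x (xmin P) (xmax P) x y ex ey He (conj Hx1 Hx2)).
    pose proof (seg_y (ymin P) (ymax P) (xmin P) y ex ey He (conj Hy1 Hy2)).
    pose proof (seg_y (ymin P) (ymax P) (xmax P) y ex ey He (conj Hy1 Hy2)).
    revert H H0 H1. unfold Rmax. repeat destruct Rle_dec; lra.
Qed.
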